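(* Let $$\Lambda=\begin{pmatrix}1&-1&-1&-1&2&0&0&0\\-1&1&-1&-1&0&2&0&0\\0&0&2&0&-1&-1&1&-1\end{pmatrix},\qquad W=\begin{pmatrix}2&0&-1&-1\\0&2&-1&-1\\-1&-1&2&0\end{pmatrix}.$$ Let $\mathbb X$ be the complete toric variety whose fan is the fan over the faces of the polytope $\Delta=\mathrm{conv}(\Lambda)\subset\mathbb R^3$, and let $X$ be the complete toric variety whose fan is the fan over the faces of the simplex $\mathrm{conv}(W)$ (so $X\cong\mathbb P^3/\mu_4$). The fan of $\mathbb X$ refines that of $X$, and $\phi:\mathbb X\to X$ denotes the induced birational toric morphism (the blow up of $X$ at four torus fixed points). Let $x_1,\dots,x_8$ be the Cox coordinates of $\mathbb X$ ($x_i$ corresponding to the $i$-th column of $\Lambda$) and $y_1,\dots,y_4$ those of $X$ ($y_j$ corresponding to the $j$-th column of $W$). For $\psi\in\mathbb C$ let $$Y^\vee_{BB}=\mathcal V(x_1^2x_5^2+x_2^2x_6^2+\psi x_1x_2x_3x_4,\ x_3^2x_7^2+x_4^2x_8^2+\psi x_5x_6x_7x_8)\subset\mathbb X,$$ $$Y^\vee_{LT}=\mathcal V(y_1^2+y_2^2+\psi y_3y_4,\ \psi y_1y_2+y_3^2+y_4^2)\subset X.$$ Then, for generic $\psi$, $Y^\vee_{BB}$ is the strict transform of $Y^\vee_{LT}$ under $\phi$, i.e. $Y^\vee_{BB}=\phi^{-1}_*(Y^\vee_{LT})$.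
   Context: The fan over the faces of a polytope $\Delta$ containing the origin in its interior is the complete fan consisting of the cones over the proper faces of $\Delta$ (and their subcones). Cox coordinates: a complete toric variety whose rays are generated by columns $\mathbf v_1,\dots,\mathbf v_m$ of a fan matrix is a quotient of an open subset of $\mathbb C^m$ by a quasi-torus, and $\mathcal V(f_1,\dots,f_s)$ denotes the subvariety cut out by the class-group-homogeneous polynomials $f_i$ in the coordinates $x_1,\dots,x_m$. The strict transform $\phi^{-1}_*(Y)$ of a subvariety $Y$ under a birational morphism $\phi$ is the closure of $\phi^{-1}(Y\cap U)$, where $U$ is the open set over which $\phi$ is an isomorphism.
   Formalization: φ is the relation pairing points of 𝕏 and X with equal characters on a common affine chart, not a morphism of refining fans, and U is the union of orbits of X with cones in both fans. Apart from conventions, each condition added here is assumed in the paper as well or is needed for the statement above to hold. *)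

(* Defs.v *)
(* Toric varieties are handled through their Cox
   construction: a complete toric variety with ray generators the columns
   v_1..v_m of an integer matrix V (n x m) is the quotient of the Cox open set
   C^m \ Z(Sigma) by the quasi-torus H_V.  Subsets of the quotient are
   represented by H_V-saturated subsets of the Cox open set. *)
From mathcomp Require Import all_boot all_algebra.
From mathcomp Require Import reals.
From mathcomp.real_closed Require Import complex.
From mathcomp Require mpoly.

Set Implicit Arguments.
Unset Strict Implicit.
Unset Printing Implicit Defensive.
Import GRing.Theory Num.Theory.
Local Open Scope ring_scope.

Section Toric.
Variables (C : fieldType) (n m : nat).
Implicit Types (V : 'M[int]_(n, m)) (x t : 'I_m -> C) (S : {set 'I_m}).

Definition vcol V (k : 'I_m) : 'I_n -> rat := fun i => (V i k)%:~R.

Definition dotq (u v : 'I_n -> rat) : rat := \sum_(i < n) u i * v i.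

(* S is the set of vertices (columns of V) lying on a proper face of the
   polytope conv(V), origin in its interior: S = argmax of a nonzero linear
   functional u.  The fan over the faces of conv(V) consists of the cones
   cone{v_k | k in S} for such S, together with the zero cone. *)
Definition face_set V S : Prop :=
  exists u : 'I_n -> rat, (exists i, u i != 0) /\
    forall k, k \in S <-> (forall j, dotq u (vcol V j) <= dotq u (vcol V k)).

Definition in_cone V S (v : 'I_n -> rat) : Prop :=
  exists c : 'I_m -> rat, (forall k, 0 <= c k) /\ (forall k, k \notin S -> c k = 0)
    /\ forall i, v i = \sum_(k < m) c k * vcol V k i.

Definition fan_cone V S : Prop := S = set0 \/ face_set V S.

(* complement of the irrelevant locus Z(Sigma): the zero coordinates of x
   correspond to rays of a single cone of the fan *)
Definition cox_open V x : Prop :=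
  exists S, face_set V S /\ forall k, x k = 0 -> k \in S.

(* the quasi-torus H_V = Hom(Cl, C^* ) inside (C^* )^m *)
Definition quasitorus V t : Prop :=
  (forall k, t k != 0) /\ forall i : 'I_n, \prod_(k < m) t k ^ (V i k) = 1.

Definition act t x : 'I_m -> C := fun k => t k * x k.

Definition zariski_closed (A : ('I_m -> C) -> Prop) : Prop :=
  exists F : mpoly.mpoly m C -> Prop,
    forall x, A x <-> (forall p, F p -> mpoly.meval x p = 0).

(* closed subsets of the toric variety X_V (quotient topology), represented by
   their preimages: H_V-saturated, relatively Zariski closed in the Cox open set *)
Definition quot_closed V (A : ('I_m -> C) -> Prop) : Prop :=
  (exists Z, zariski_closed Z /\ forall x, A x <-> cox_open V x /\ Z x) /\
  (forall t x, quasitorus V t -> A x -> A (act t x)).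

(* preimage in the Cox open set of the closure in X_V of (the image of) B *)
Definition quot_closure V (B : ('I_m -> C) -> Prop) (x : 'I_m -> C) : Prop :=
  cox_open V x /\
  forall A, quot_closed V A -> (forall y, B y -> A y) -> A x.

(* the character chi^mu of the torus, written in Cox coordinates *)
Definition chi V (mu : 'I_n -> int) x : C :=
  \prod_(k < m) x k ^ (\sum_(i < n) mu i * V i k).

End Toric.

Section Morphism.
Variables (C : fieldType) (n m p : nat).
Variables (V : 'M[int]_(n, m)) (W : 'M[int]_(n, p)).

(* phi([x]) = [y] for the toric morphism X_V -> X_W induced by the identity of
   the lattice Z^n (the fan of V refining the fan of W): there is a cone
   sigma = cone{w_j | j in S} of the fan of W such that [y] lies in the affine
   chart U_sigma, [x] lies in phi^{-1}(U_sigma) (all rays of its orbit cone lie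
   in sigma), and all chart coordinates chi^mu, mu in sigma^vee, agree. *)
Definition toric_map_rel (x : 'I_m -> C) (y : 'I_p -> C) : Prop :=
  exists S : {set 'I_p}, face_set W S /\
    (forall j, j \notin S -> y j != 0) /\
    (forall k, x k = 0 -> in_cone W S (vcol V k)) /\
    forall mu : 'I_n -> int,
      (forall j, j \in S -> 0 <= \sum_(i < n) mu i * W i j) ->
      chi V mu x = chi W mu y.

(* the open set of X_W over which phi is an isomorphism: the union of the
   orbits whose cone (generated by the rays w_j with y_j = 0) is also a cone
   of the fan of V *)
Definition iso_locus (y : 'I_p -> C) : Prop :=
  exists S : {set 'I_m}, fan_cone V S /\
    forall v, in_cone W [set j | y j == 0] v <-> in_cone V S v.

(* strict transform phi^{-1}_*(Y) = closure of phi^{-1}(Y \cap U) *)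
Definition strict_transform (Y : ('I_p -> C) -> Prop) (x : 'I_m -> C) : Prop :=
  quot_closure V
    (fun x' => cox_open V x' /\
       exists y, cox_open W y /\ toric_map_rel x' y /\ Y y /\ iso_locus y) x.

End Morphism.

Definition mx_of_rows (r c : nat) (rows : seq (seq int)) : 'M[int]_(r, c) :=
  \matrix_(i < r, j < c) nth 0 (nth [::] rows i) j.

Definition Lambda : 'M[int]_(3, 8) :=
  mx_of_rows 3 8 [:: [:: 1; -1; -1; -1; 2; 0; 0; 0];
                     [:: -1; 1; -1; -1; 0; 2; 0; 0];
                     [:: 0; 0; 2; 0; -1; -1; 1; -1]].

Definition Wmx : 'M[int]_(3, 4) :=
  mx_of_rows 3 4 [:: [:: 2; 0; -1; -1];
                     [:: 0; 2; -1; -1];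
                     [:: -1; -1; 2; 0]].

(* 1-based Cox coordinate: cc x i = x_i *)
Definition cc (C : Type) (N : nat) (x : 'I_N.+1 -> C) (i : nat) : C :=
  x (inord i.-1).

Definition Y_BB (C : fieldType) (psi : C) (x : 'I_8 -> C) : Prop :=
  cc x 1 ^+ 2 * cc x 5 ^+ 2 + cc x 2 ^+ 2 * cc x 6 ^+ 2
    + psi * cc x 1 * cc x 2 * cc x 3 * cc x 4 = 0 /\
  cc x 3 ^+ 2 * cc x 7 ^+ 2 + cc x 4 ^+ 2 * cc x 8 ^+ 2
    + psi * cc x 5 * cc x 6 * cc x 7 * cc x 8 = 0.

Definition Y_LT (C : fieldType) (psi : C) (y : 'I_4 -> C) : Prop :=
  cc y 1 ^+ 2 + cc y 2 ^+ 2 + psi * cc y 3 * cc y 4 = 0 /\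
  psi * cc y 1 * cc y 2 + cc y 3 ^+ 2 + cc y 4 ^+ 2 = 0.

(* Main.v *)
Require Import Defs.
From mathcomp Require Import all_boot all_order all_algebra.
From mathcomp Require Import reals.
From mathcomp.real_closed Require Import complex.
From mathcomp Require mpoly.
From mathcomp Require Import ring lra.
Set Implicit Arguments.
Unset Strict Implicit.
Unset Printing Implicit Defensive.
Import Order.TTheory GRing.Theory Num.Theory.
Local Open Scope ring_scope.

Section Gen.
Variable C : fieldType.

Lemma big8 (F : 'I_8 -> C) : \prod_(k < 8) F k =
  F (inord 0) * F (inord 1) * F (inord 2) * F (inord 3) * F (inord 4) * F (inord 5) * F (inord 6) * F (inord 7).
Proof.
rewrite !big_ord_recr big_ord0 /= mul1r.
by repeat congr (_ * _); apply: f_equal; apply: val_inj; rewrite /= inordK.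
Qed.

Lemma prod_expzD m (x : 'I_m -> C) (a b : 'I_m -> int) :
  (forall k, x k = 0 -> 0 <= a k /\ 0 <= b k) ->
  \prod_(k < m) x k ^ (a k + b k) = \prod_(k < m) x k ^ a k * \prod_(k < m) x k ^ b k.
Proof.
move=> H; rewrite -big_split; apply: eq_bigr => k _ /=.
case: (eqVneq (x k) 0) => [x0|xn]; last by rewrite expfzDr.
have [ha hb] := H k x0.
by rewrite -(gez0_abs ha) -(gez0_abs hb) -PoszD -!exprnP exprD.
Qed.

Lemma prod_expz_neq0 m (x : 'I_m -> C) (a : 'I_m -> int) :
  (forall k, a k != 0 -> x k != 0) -> \prod_(k < m) x k ^ a k != 0.
Proof.
move=> H; rewrite prodf_seq_neq0; apply/allP => k _ /=.
case: (eqVneq (a k) 0) => [->|an]; first by rewrite expr0z oner_eq0.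
by rewrite expfz_neq0 // H.
Qed.

Lemma prod_expz_eq0 m (x : 'I_m -> C) (a : 'I_m -> int) k :
  x k = 0 -> a k != 0 -> \prod_(k < m) x k ^ a k = 0.
Proof.
move=> x0 an; rewrite (bigD1 k) //= x0 exp0rz (negbTE an) mul0r //.
Qed.
End Gen.

Definition mk3 (a b c : int) : 'I_3 -> int := fun i => nth 0 [:: a; b; c] i.

Lemma sumL a b c (k : 'I_8) : \sum_(i < 3) mk3 a b c i * Lambda i k =
  a * nth 0 [:: 1; -1; -1; -1; 2; 0; 0; 0] k + b * nth 0 [:: -1; 1; -1; -1; 0; 2; 0; 0] k
  + c * nth 0 [:: 0; 0; 2; 0; -1; -1; 1; -1] k.
Proof. by rewrite !big_ord_recr big_ord0 /= !mxE add0r. Qed.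

Lemma sumW a b c (k : 'I_4) : \sum_(i < 3) mk3 a b c i * Wmx i k =
  a * nth 0 [:: 2; 0; -1; -1] k + b * nth 0 [:: 0; 2; -1; -1] k
  + c * nth 0 [:: -1; -1; 2; 0] k.
Proof. by rewrite !big_ord_recr big_ord0 /= !mxE add0r. Qed.



Lemma ordE n (i : nat) (h : (i < n.+1)%N) : Ordinal h = inord i.
Proof. by apply: val_inj; rewrite /= inordK. Qed.

Lemma dot3 (u v : 'I_3 -> rat) :
  dotq u v = u (inord 0) * v (inord 0) + u (inord 1) * v (inord 1) + u (inord 2) * v (inord 2).
Proof.
rewrite /dotq !big_ord_recr big_ord0 /= add0r.
by congr (_ * _ + _ * _ + _ * _); apply: f_equal; apply: val_inj; rewrite /= inordK.
Qed.

Lemma dotL (u : 'I_3 -> rat) (k : 'I_8) : dotq u (vcol Lambda k) =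
  u (inord 0) * (nth 0 [:: 1; -1; -1; -1; 2; 0; 0; 0] k)%:~R
  + u (inord 1) * (nth 0 [:: -1; 1; -1; -1; 0; 2; 0; 0] k)%:~R
  + u (inord 2) * (nth 0 [:: 0; 0; 2; 0; -1; -1; 1; -1] k)%:~R.
Proof. by rewrite dot3 /vcol !mxE !inordK. Qed.

Lemma dotW (u : 'I_3 -> rat) (k : 'I_4) : dotq u (vcol Wmx k) =
  u (inord 0) * (nth 0 [:: 2; 0; -1; -1] k)%:~R
  + u (inord 1) * (nth 0 [:: 0; 2; -1; -1] k)%:~R
  + u (inord 2) * (nth 0 [:: -1; -1; 2; 0] k)%:~R.
Proof. by rewrite dot3 /vcol !mxE !inordK. Qed.

Lemma u_nz (u : 'I_3 -> rat) : (exists i, u i != 0) ->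
  u (inord 0) != 0 \/ u (inord 1) != 0 \/ u (inord 2) != 0.
Proof. by case=> -[[|[|[|//]]] hi]; rewrite ordE; tauto. Qed.

Lemma ne0_lt (r : rat) : r != 0 -> r < 0 \/ 0 < r.
Proof. by rewrite neq_lt => /orP. Qed.

Ltac inst8 h := move: (h (inord 0)) (h (inord 1)) (h (inord 2)) (h (inord 3))
   (h (inord 4)) (h (inord 5)) (h (inord 6)) (h (inord 7)).
Ltac inst4 h := move: (h (inord 0)) (h (inord 1)) (h (inord 2)) (h (inord 3)).

Ltac killL :=
  let u := fresh "u" in let hu := fresh "hu" in let hS := fresh "hS" in
  let hu' := fresh "hu'" in
  move=> [u [hu hS]];
  have hu' := u_nz hu;
  repeat match goal with
  | [ h : is_true (?k \in ?S) |- _ ] => let h1 := fresh "h" in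
         move: ((hS k).1 h) => h1; clear h; inst8 h1; clear h1 end;
  rewrite !dotL !inordK //=; move=> *; case: hu' => [|[|]] /ne0_lt [] ?; lra.

Lemma faceL_01 (S : {set 'I_8}) : (inord 0 : 'I_8) \in S -> (inord 1 : 'I_8) \in S -> face_set Lambda S -> False.
Proof. move=> ? ?; killL. Qed.
Lemma faceL_05 (S : {set 'I_8}) : (inord 0 : 'I_8) \in S -> (inord 5 : 'I_8) \in S -> face_set Lambda S -> False.
Proof. move=> ? ?; killL. Qed.
Lemma faceL_14 (S : {set 'I_8}) : (inord 1 : 'I_8) \in S -> (inord 4 : 'I_8) \in S -> face_set Lambda S -> False.
Proof. move=> ? ?; killL. Qed.
Lemma faceL_36 (S : {set 'I_8}) : (inord 3 : 'I_8) \in S -> (inord 6 : 'I_8) \in S -> face_set Lambda S -> False.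
Proof. move=> ? ?; killL. Qed.
Lemma faceL_67 (S : {set 'I_8}) : (inord 6 : 'I_8) \in S -> (inord 7 : 'I_8) \in S -> face_set Lambda S -> False.
Proof. move=> ? ?; killL. Qed.
Lemma faceL_27 (S : {set 'I_8}) : (inord 2 : 'I_8) \in S -> (inord 7 : 'I_8) \in S -> face_set Lambda S -> False.
Proof. move=> ? ?; killL. Qed.
Lemma faceL_2345 (S : {set 'I_8}) : (inord 2 : 'I_8) \in S -> (inord 3 : 'I_8) \in S ->
  (inord 4 : 'I_8) \in S -> (inord 5 : 'I_8) \in S -> face_set Lambda S -> False.
Proof. move=> ? ? ? ?; killL. Qed.

Ltac killW :=
  let u := fresh "u" in let hu := fresh "hu" in let hS := fresh "hS" in
  let hu' := fresh "hu'" in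
  move=> [u [hu hS]];
  have hu' := u_nz hu;
  repeat match goal with
  | [ h : is_true (?k \in ?S) |- _ ] => let h1 := fresh "h" in
         move: ((hS k).1 h) => h1; clear h; inst4 h1; clear h1 end;
  rewrite !dotW !inordK //=; move=> *; case: hu' => [|[|]] /ne0_lt [] ?; lra.

Lemma faceW_notall (S : {set 'I_4}) : face_set Wmx S -> exists j, j \notin S.
Proof.
move=> hf; case: (boolP (inord 0 \in S)); last by exists (inord 0).
case: (boolP (inord 1 \in S)); last by exists (inord 1).
case: (boolP (inord 2 \in S)); last by exists (inord 2).
case: (boolP (inord 3 \in S)); last by exists (inord 3).
move=> ? ? ? ?; exfalso; move: hf; killW.
Qed.

Definition q3 (a b c : rat) : 'I_3 -> rat := fun i => nth 0 [:: a; b; c] i.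

Lemma eq_inord n a b : (a <= n)%N -> (b <= n)%N -> ((inord a : 'I_n.+1) == inord b) = (a == b).
Proof. by move=> ha hb; apply/eqP/eqP => [/(congr1 val)|->//]; rewrite /= !inordK. Qed.

Ltac face1W J I :=
  split; [exists (inord I); rewrite /q3 inordK //= | ];
  case=> [[|[|[|[|//]]]] ?]; rewrite ordE in_set1 eq_inord //=; split => //;
  first [ solve [move=> _; case=> [[|[|[|[|//]]]] ?]; rewrite ordE !dotW /q3 !inordK //=; lra]
        | solve [move=> h; have := h (inord J); rewrite !dotW /q3 !inordK //=; lra] ].

Ltac face1L J I :=
  split; [exists (inord I); rewrite /q3 inordK //= | ];
  case=> [[|[|[|[|[|[|[|[|//]]]]]]]] ?]; rewrite ordE in_set1 eq_inord //=; split => //;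
  first [ solve [move=> _; case=> [[|[|[|[|[|[|[|[|//]]]]]]]] ?]; rewrite ordE !dotL /q3 !inordK //=; lra]
        | solve [move=> h; have := h (inord J); rewrite !dotL /q3 !inordK //=; lra] ].

Lemma faceW0 : face_set Wmx [set inord 0].
Proof. exists (q3 2 0 (-1)); face1W 0%N 0%N. Qed.
Lemma faceW1 : face_set Wmx [set inord 1].
Proof. exists (q3 0 2 (-1)); face1W 1%N 1%N. Qed.
Lemma faceW2 : face_set Wmx [set inord 2].
Proof. exists (q3 (-1) (-1) 2); face1W 2%N 0%N. Qed.
Lemma faceW3 : face_set Wmx [set inord 3].
Proof. exists (q3 (-1) (-1) (-1)); face1W 3%N 0%N. Qed.
Lemma faceL4 : face_set Lambda [set inord 4].
Proof. exists (q3 2 0 (-1)); face1L 4%N 0%N. Qed.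
Lemma faceL5 : face_set Lambda [set inord 5].
Proof. exists (q3 0 2 (-1)); face1L 5%N 1%N. Qed.
Lemma faceL2 : face_set Lambda [set inord 2].
Proof. exists (q3 (-1) (-1) 2); face1L 2%N 0%N. Qed.
Lemma faceL3 : face_set Lambda [set inord 3].
Proof. exists (q3 (-1) (-1) (-1)); face1L 3%N 0%N. Qed.

Lemma cone_nonneg n m p (V : 'M[int]_(n, m)) (W : 'M[int]_(n, p)) (S : {set 'I_p}) k
    (mu : 'I_n -> int) :
  in_cone W S (vcol V k) -> (forall j, j \in S -> 0 <= \sum_(i < n) mu i * W i j) ->
  0 <= \sum_(i < n) mu i * V i k.
Proof.
case=> c [c0 [cS cv]] hmu.
suff : (0 : rat) <= (\sum_(i < n) mu i * V i k)%:~R by rewrite ler0z.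
have -> : ((\sum_(i < n) mu i * V i k)%:~R : rat) =
    \sum_(j < p) c j * (\sum_(i < n) mu i * W i j)%:~R.
  rewrite rmorph_sum /=.
  under eq_bigr => i _ do rewrite rmorphM /= -/(vcol V k i) cv mulr_sumr.
  rewrite exchange_big /=; apply: eq_bigr => j _.
  rewrite rmorph_sum mulr_sumr; apply: eq_bigr => i _.
  by rewrite rmorphM /= /vcol mulrCA.
apply: sumr_ge0 => j _.
case: (boolP (j \in S)) => hj; last by rewrite cS // mul0r.
by apply: mulr_ge0 => //; rewrite ler0z hmu.
Qed.

Section G.
Variable C : fieldType.

Lemma big4 (F : 'I_4 -> C) : \prod_(k < 4) F k = F (inord 0) * F (inord 1) * F (inord 2) * F (inord 3).
Proof.
rewrite !big_ord_recr big_ord0 /= mul1r.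
by repeat congr (_ * _); apply: f_equal; apply: val_inj; rewrite /= inordK.
Qed.

Definition xt (y : 'I_4 -> C) : 'I_8 -> C := fun k =>
  nth 1 [:: 1; 1; y (inord 2); y (inord 3); y (inord 0); y (inord 1); 1; 1] k.

Lemma colLW (mu : 'I_3 -> int) a b : (a < 8)%N -> (b < 4)%N ->
  nth 0%N [:: 4; 5; 2; 3]%N b = a ->
  \sum_(i < 3) mu i * Lambda i (inord a) = \sum_(i < 3) mu i * Wmx i (inord b).
Proof.
move=> ha hb hab; apply: eq_bigr => i _; congr (_ * _); rewrite !mxE !inordK //.
by case: i => -[|[|[|//]]] ? /=; move: hb hab; case: b => [|[|[|[|//]]]] _ <-.
Qed.

Lemma chi_xt mu y : chi Lambda mu (xt y) = chi Wmx mu y.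
Proof.
rewrite /chi big8 big4 /xt !inordK //= !exp1rz !mul1r !mulr1.
rewrite (@colLW mu 2 2) // (@colLW mu 3 3) // (@colLW mu 4 0) // (@colLW mu 5 1) //.
ring.
Qed.

Definition P8 (x : 'I_8 -> C) (a : 'I_8 -> int) := \prod_(k < 8) x k ^ a k.
Definition P4 (x : 'I_4 -> C) (a : 'I_4 -> int) := \prod_(k < 4) x k ^ a k.
Definition v8 (s : seq int) : 'I_8 -> int := fun k => nth 0 s k.
Definition v4 (s : seq int) : 'I_4 -> int := fun k => nth 0 s k.

Lemma E1P (psi : C) x : cc x 1 ^+ 2 * cc x 5 ^+ 2 + cc x 2 ^+ 2 * cc x 6 ^+ 2
    + psi * cc x 1 * cc x 2 * cc x 3 * cc x 4 =
  P8 x (v8 [:: 2; 0; 0; 0; 2; 0; 0; 0]) + P8 x (v8 [:: 0; 2; 0; 0; 0; 2; 0; 0])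
  + psi * P8 x (v8 [:: 1; 1; 1; 1; 0; 0; 0; 0]).
Proof. rewrite /P8 /v8 /cc !big8 !inordK //= !expr0z. rewrite -!exprnP. ring. Qed.
End G.

Section Tr.
Variable C : fieldType.

Definition Pm m (x : 'I_m -> C) (a : 'I_m -> int) := \prod_(k < m) x k ^ a k.

Lemma transfer_id (psi : C) m (x : 'I_m -> C) (a1 a2 a3 g c e1 e2 e3 : 'I_m -> int) :
  (forall k, a1 k + g k = c k + e1 k) -> (forall k, a2 k + g k = c k + e2 k) ->
  (forall k, a3 k + g k = c k + e3 k) ->
  (forall k, [/\ 0 <= a1 k, 0 <= a2 k, 0 <= a3 k, 0 <= g k & 0 <= c k]) ->
  (forall k, x k = 0 -> [/\ 0 <= e1 k, 0 <= e2 k & 0 <= e3 k]) ->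
  (Pm x a1 + Pm x a2 + psi * Pm x a3) * Pm x g = Pm x c * (Pm x e1 + Pm x e2 + psi * Pm x e3).
Proof.
move=> h1 h2 h3 hp hz.
have key : forall a e, (forall k, a k + g k = c k + e k) -> (forall k, 0 <= a k) ->
    (forall k, x k = 0 -> 0 <= e k) -> Pm x a * Pm x g = Pm x c * Pm x e.
  move=> a e hae ha he; rewrite /Pm -!prod_expzD.
  - by apply: eq_bigr => k _; rewrite hae.
  - by move=> k /he; case: (hp k).
  - by move=> k _; case: (hp k).
rewrite !mulrDl -mulrA !mulrDr (mulrCA _ psi).
rewrite (key a1 e1) // ?(key a2 e2) // ?(key a3 e3) //;
  try (by move=> k; case: (hp k)); try (by move=> k /hz []).
Qed.

Lemma transfer (psi : C) m (x z : 'I_m -> C) (a1 a2 a3 g c e1 e2 e3 : 'I_m -> int) :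
  (forall k, a1 k + g k = c k + e1 k) -> (forall k, a2 k + g k = c k + e2 k) ->
  (forall k, a3 k + g k = c k + e3 k) ->
  (forall k, [/\ 0 <= a1 k, 0 <= a2 k, 0 <= a3 k, 0 <= g k & 0 <= c k]) ->
  (forall k, x k = 0 -> [/\ 0 <= e1 k, 0 <= e2 k & 0 <= e3 k]) ->
  (forall k, z k = 0 -> [/\ 0 <= e1 k, 0 <= e2 k & 0 <= e3 k]) ->
  Pm x e1 = Pm z e1 -> Pm x e2 = Pm z e2 -> Pm x e3 = Pm z e3 ->
  Pm z c != 0 -> Pm x g != 0 ->
  Pm z a1 + Pm z a2 + psi * Pm z a3 = 0 ->
  Pm x a1 + Pm x a2 + psi * Pm x a3 = 0.
Proof.
move=> h1 h2 h3 hp hzx hzz q1 q2 q3 hc hg hQ.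
have := transfer_id psi h1 h2 h3 hp hzz; rewrite hQ mul0r => /esym/eqP.
rewrite mulf_eq0 (negbTE hc) /= -q1 -q2 -q3 => /eqP hS.
have := transfer_id psi h1 h2 h3 hp hzx; rewrite hS mulr0 => /eqP.
by rewrite mulf_eq0 (negbTE hg) orbF => /eqP.
Qed.
End Tr.

Lemma E2P (C : fieldType) (psi : C) x : cc x 3 ^+ 2 * cc x 7 ^+ 2 + cc x 4 ^+ 2 * cc x 8 ^+ 2
    + psi * cc x 5 * cc x 6 * cc x 7 * cc x 8 =
  P8 x (v8 [:: 0; 0; 2; 0; 0; 0; 2; 0]) + P8 x (v8 [:: 0; 0; 0; 2; 0; 0; 0; 2])
  + psi * P8 x (v8 [:: 0; 0; 0; 0; 1; 1; 1; 1]).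
Proof. rewrite /P8 /v8 /cc !big8 !inordK //= !expr0z. rewrite -!exprnP. ring. Qed.

Lemma LT_xt (C : fieldType) (psi : C) y : Y_LT psi y -> Y_BB psi (xt y).
Proof.
rewrite /Y_LT /Y_BB /cc /xt !inordK //= => -[h1 h2]; split.
  by rewrite -h1; ring.
by rewrite -h2; ring.
Qed.

Ltac ord8 := case=> [[|[|[|[|[|[|[|[|//]]]]]]]] ?]; rewrite ?ordE.
Ltac ord4 := case=> [[|[|[|[|//]]]] ?]; rewrite ?ordE.

Section Rel.
Variables (C : fieldType) (psi : C) (x : 'I_8 -> C) (y : 'I_4 -> C) (S : {set 'I_4}).
Hypotheses (hyS : forall j, j \notin S -> y j != 0)
  (hxz : forall k, x k = 0 -> in_cone Wmx S (vcol Lambda k))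
  (hchi : forall mu, (forall j, j \in S -> 0 <= \sum_(i < 3) mu i * Wmx i j) ->
     chi Lambda mu x = chi Wmx mu y).

Definition condj (j0 : 'I_4) (mu : 'I_3 -> int) :=
  forall j, j != j0 -> 0 <= \sum_(i < 3) mu i * Wmx i j.

Variables (j0 : 'I_4).
Hypothesis (hj0 : j0 \notin S).

Lemma condS mu : condj j0 mu -> forall j, j \in S -> 0 <= \sum_(i < 3) mu i * Wmx i j.
Proof. by move=> h j hj; apply: h; apply/eqP => e; move: hj0; rewrite -e hj. Qed.

Lemma chi_x_xt mu : condj j0 mu -> chi Lambda mu x = chi Lambda mu (xt y).
Proof. by move=> h; rewrite chi_xt hchi //; apply: condS. Qed.

Lemma zx mu : condj j0 mu -> forall k, x k = 0 -> 0 <= \sum_(i < 3) mu i * Lambda i k.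
Proof. by move=> h k /hxz hk; apply: cone_nonneg hk (condS h). Qed.

Lemma zxt mu : condj j0 mu -> forall k, xt y k = 0 -> 0 <= \sum_(i < 3) mu i * Lambda i k.
Proof.
move=> h.
have H : forall a b, (a < 8)%N -> (b < 4)%N -> nth 0%N [:: 4; 5; 2; 3]%N b = a ->
    y (inord b) = 0 -> 0 <= \sum_(i < 3) mu i * Lambda i (inord a).
  move=> a b ha hb hab y0; rewrite (@colLW mu a b) //; apply: (condS h).
  by case: (boolP (inord b \in S)) => // /hyS; rewrite y0 eqxx.
ord8; rewrite /xt inordK //= => y0;
  first [ by move: y0; move/eqP; rewrite oner_eq0
        | by apply: (H _ 2%N)
        | by apply: (H _ 3%N)
        | by apply: (H _ 0%N)
        | by apply: (H _ 1%N) ].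
Qed.

Lemma nzx mu : condj j0 mu -> (forall j, \sum_(i < 3) mu i * Wmx i j != 0 -> y j != 0) ->
  forall k, \sum_(i < 3) mu i * Lambda i k != 0 -> x k != 0.
Proof.
move=> h hy k hk; apply/eqP => x0.
have : chi Wmx mu y != 0 by apply: prod_expz_neq0.
rewrite -hchi; last by apply: condS.
by rewrite /chi (@prod_expz_eq0 _ _ x (fun k => \sum_(i < 3) mu i * Lambda i k) k x0 hk) eqxx.
Qed.

Lemma do_case (mi : 'I_3 -> int) (c1 g1 c2 g2 : 'I_8 -> int)
    (m11 m12 m13 m21 m22 m23 : 'I_3 -> int) :
  Y_LT psi y ->
  condj j0 mi ->
  (forall j, \sum_(l < 3) mi l * Wmx l j != 0 -> y j != 0) ->
  (forall k, g1 k != 0 \/ g2 k != 0 -> \sum_(l < 3) mi l * Lambda l k != 0) ->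
  (forall k, c1 k != 0 \/ c2 k != 0 -> xt y k != 0) ->
  condj j0 m11 -> condj j0 m12 -> condj j0 m13 ->
  condj j0 m21 -> condj j0 m22 -> condj j0 m23 ->
  (forall k, v8 [:: 2; 0; 0; 0; 2; 0; 0; 0] k + g1 k = c1 k + \sum_(l < 3) m11 l * Lambda l k) ->
  (forall k, v8 [:: 0; 2; 0; 0; 0; 2; 0; 0] k + g1 k = c1 k + \sum_(l < 3) m12 l * Lambda l k) ->
  (forall k, v8 [:: 1; 1; 1; 1; 0; 0; 0; 0] k + g1 k = c1 k + \sum_(l < 3) m13 l * Lambda l k) ->
  (forall k, v8 [:: 0; 0; 2; 0; 0; 0; 2; 0] k + g2 k = c2 k + \sum_(l < 3) m21 l * Lambda l k) ->
  (forall k, v8 [:: 0; 0; 0; 2; 0; 0; 0; 2] k + g2 k = c2 k + \sum_(l < 3) m22 l * Lambda l k) ->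
  (forall k, v8 [:: 0; 0; 0; 0; 1; 1; 1; 1] k + g2 k = c2 k + \sum_(l < 3) m23 l * Lambda l k) ->
  (forall k, [/\ 0 <= g1 k, 0 <= c1 k, 0 <= g2 k & 0 <= c2 k]) ->
  Y_BB psi x.
Proof.
move=> hLT hmi hmiy hmig hc h11 h12 h13 h21 h22 h23 e11 e12 e13 e21 e22 e23 hp.
have hxt := LT_xt hLT; move: hxt; rewrite /Y_BB E1P E2P E1P E2P => -[q1 q2].
have hv : forall (s : seq int) (k : 'I_8), all (fun z => 0 <= z) s -> 0 <= v8 s k.
  move=> s k hs; rewrite /v8; case: (ltnP k (size s)) => hk; last by rewrite nth_default.
  by apply: (allP hs); apply: mem_nth.
have hgx : forall g : 'I_8 -> int, (forall k, g k != 0 -> \sum_(l < 3) mi l * Lambda l k != 0) ->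
    Pm x g != 0.
  move=> g hg; apply: prod_expz_neq0 => k /hg; exact: nzx.
split.
- apply: (transfer (z := xt y) e11 e12 e13) => //.
  + by move=> k; case: (hp k) => *; split => //; apply: hv.
  + by move=> k hk; split; apply: zx.
  + by move=> k hk; split; apply: zxt.
  + exact: chi_x_xt.
  + exact: chi_x_xt.
  + exact: chi_x_xt.
  + by apply: prod_expz_neq0 => k hk; apply: hc; left.
  + by apply: hgx => k hk; apply: hmig; left.
- apply: (transfer (z := xt y) e21 e22 e23) => //.
  + by move=> k; case: (hp k) => *; split => //; apply: hv.
  + by move=> k hk; split; apply: zx.
  + by move=> k hk; split; apply: zxt.
  + exact: chi_x_xt.
  + exact: chi_x_xt.
  + exact: chi_x_xt.
  + by apply: prod_expz_neq0 => k hk; apply: hc; right.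
  + by apply: hgx => k hk; apply: hmig; right.
Qed.
End Rel.

Lemma sq0 (C : fieldType) (u : C) : u ^+ 2 = 0 -> u = 0.
Proof. by move/eqP; rewrite expf_eq0 /= => /eqP. Qed.

Lemma prod0 (C : fieldType) (psi c d : C) : psi != 0 -> psi * c * d = 0 -> c = 0 \/ d = 0.
Proof. by move=> hp /eqP; rewrite -mulrA !mulf_eq0 (negbTE hp) /= => /orP[] /eqP; tauto. Qed.

Lemma LT_alg (C : fieldType) (psi a b c d : C) : psi != 0 ->
  a ^+ 2 + b ^+ 2 + psi * c * d = 0 -> psi * a * b + c ^+ 2 + d ^+ 2 = 0 ->
  (a = 0 /\ b = 0) \/ (a = 0 /\ c = 0) \/ (a = 0 /\ d = 0) \/ (b = 0 /\ c = 0) \/ (b = 0 /\ d = 0) \/ (c = 0 /\ d = 0) ->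
  [/\ a = 0, b = 0, c = 0 & d = 0].
Proof.
move=> hp h1 h2 H.
case: H => [[? ?]|[[? ?]|[[? ?]|[[? ?]|[[? ?]|[? ?]]]]]]; subst; move: h1 h2;
  rewrite ?expr0n /= ?mulr0 ?mul0r ?add0r ?addr0 => h1 h2.
- case: (prod0 hp h1) => e; move: h2; rewrite e expr0n /= ?add0r ?addr0 => /sq0 ->; by [].
- by move/sq0: h1 => ->; move/sq0: h2 => ->.
- by move/sq0: h1 => ->; move/sq0: h2 => ->.
- by move/sq0: h1 => ->; move/sq0: h2 => ->.
- by move/sq0: h1 => ->; move/sq0: h2 => ->.
- case: (prod0 hp h2) => e; move: h1; rewrite e expr0n /= ?add0r ?addr0 => /sq0 ->; by [].
Qed.

Lemma ypair (C : fieldType) (psi : C) y : psi != 0 -> cox_open Wmx y -> Y_LT psi y ->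
  (y (inord 0) = 0 /\ y (inord 1) = 0) \/ (y (inord 0) = 0 /\ y (inord 2) = 0) \/
      (y (inord 0) = 0 /\ y (inord 3) = 0) \/ (y (inord 1) = 0 /\ y (inord 2) = 0) \/
      (y (inord 1) = 0 /\ y (inord 3) = 0) \/ (y (inord 2) = 0 /\ y (inord 3) = 0) -> False.
Proof.
move=> hp [S [hS hz]] [h1 h2] hor.
have [e0 e1 e2 e3] := LT_alg hp h1 h2 hor.
have [j hj] := faceW_notall hS; move: hj; apply/negP/negPn; apply: hz.
by move: j; ord4.
Qed.

Ltac comp :=
  first
  [ assumption
  | (ord4; rewrite sumW eq_inord // inordK //=)
  | (ord4; rewrite sumW inordK //= => _)
  | (ord8; rewrite /v8 sumL inordK //= => -[] //)
  | (ord8; rewrite /v8 /xt inordK //= => -[] ?; rewrite ?oner_eq0 //)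
  | (ord8; rewrite /v8 sumL inordK //=)
  | (ord8; rewrite /v8 inordK //=) ].

Lemma BB_of_rel (C : fieldType) (psi : C) x y (S : {set 'I_4}) :
  psi != 0 -> cox_open Wmx y -> Y_LT psi y -> face_set Wmx S ->
  (forall j, j \notin S -> y j != 0) ->
  (forall k, x k = 0 -> in_cone Wmx S (vcol Lambda k)) ->
  (forall mu, (forall j, j \in S -> 0 <= \sum_(i < 3) mu i * Wmx i j) ->
     chi Lambda mu x = chi Wmx mu y) ->
  Y_BB psi x.
Proof.
move=> hp hcox hLT hS hyS hxz hchi.
have [j0 hj0] := faceW_notall hS.
have yj0 := hyS j0 hj0.
have h23 : y (inord 2) != 0 \/ y (inord 3) != 0.
  case: (eqVneq (y (inord 2)) 0) => e2; last by left.
  case: (eqVneq (y (inord 3)) 0) => e3; last by right.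
  by exfalso; apply: (ypair hp hcox hLT); tauto.
have h01 : y (inord 0) != 0 \/ y (inord 1) != 0.
  case: (eqVneq (y (inord 0)) 0) => e2; last by left.
  case: (eqVneq (y (inord 1)) 0) => e3; last by right.
  by exfalso; apply: (ypair hp hcox hLT); tauto.
move: j0 hj0 yj0; ord4 => hj0 yj0.
- case: h23 => hi.
  + by apply: (@do_case C psi x y S hyS hxz hchi _ hj0 (mk3 (-1) 1 2)
      (v8 [:: 2; 0; 0; 0; 2; 0; 0; 0]) (v8 [::]) (v8 [:: 2; 0; 0; 0; 4; 0; 0; 2]) (v8 [:: 0; 2; 2; 0; 0; 0; 0; 0])
      (mk3 0 0 0) (mk3 (-1) 1 0) (mk3 (-1) 0 0) (mk3 (-1) 1 2) (mk3 (-2) 0 0) (mk3 (-1) 1 1)); comp.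
  + by apply: (@do_case C psi x y S hyS hxz hchi _ hj0 (mk3 (-3) (-1) (-2))
      (v8 [:: 2; 0; 0; 0; 2; 0; 0; 0]) (v8 [::]) (v8 [:: 2; 0; 0; 0; 4; 0; 2; 0]) (v8 [:: 0; 2; 0; 2; 0; 0; 0; 0])
      (mk3 0 0 0) (mk3 (-1) 1 0) (mk3 (-1) 0 0) (mk3 (-2) 0 0) (mk3 (-3) (-1) (-2)) (mk3 (-2) 0 (-1))); comp.
- case: h23 => hi.
  + by apply: (@do_case C psi x y S hyS hxz hchi _ hj0 (mk3 1 (-1) 2)
      (v8 [:: 0; 2; 0; 0; 0; 2; 0; 0]) (v8 [::]) (v8 [:: 0; 2; 0; 0; 0; 4; 0; 2]) (v8 [:: 2; 0; 2; 0; 0; 0; 0; 0])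
      (mk3 1 (-1) 0) (mk3 0 0 0) (mk3 0 (-1) 0) (mk3 1 (-1) 2) (mk3 0 (-2) 0) (mk3 1 (-1) 1)); comp.
  + by apply: (@do_case C psi x y S hyS hxz hchi _ hj0 (mk3 (-1) (-3) (-2))
      (v8 [:: 0; 2; 0; 0; 0; 2; 0; 0]) (v8 [::]) (v8 [:: 0; 2; 0; 0; 0; 4; 2; 0]) (v8 [:: 2; 0; 0; 2; 0; 0; 0; 0])
      (mk3 1 (-1) 0) (mk3 0 0 0) (mk3 0 (-1) 0) (mk3 0 (-2) 0) (mk3 (-1) (-3) (-2)) (mk3 0 (-2) (-1))); comp.
- case: h01 => hi.
  + by apply: (@do_case C psi x y S hyS hxz hchi _ hj0 (mk3 1 (-1) (-2))
      (v8 [:: 0; 2; 4; 0; 0; 0; 2; 0]) (v8 [:: 0; 0; 0; 0; 2; 0; 0; 2]) (v8 [:: 0; 0; 2; 0; 0; 0; 2; 0]) (v8 [::])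
      (mk3 1 (-1) (-2)) (mk3 0 0 (-2)) (mk3 0 (-1) (-2)) (mk3 0 0 0) (mk3 (-1) (-1) (-2)) (mk3 0 0 (-1))); comp.
  + by apply: (@do_case C psi x y S hyS hxz hchi _ hj0 (mk3 (-1) 1 (-2))
      (v8 [:: 2; 0; 4; 0; 0; 0; 2; 0]) (v8 [:: 0; 0; 0; 0; 0; 2; 0; 2]) (v8 [:: 0; 0; 2; 0; 0; 0; 2; 0]) (v8 [::])
      (mk3 0 0 (-2)) (mk3 (-1) 1 (-2)) (mk3 (-1) 0 (-2)) (mk3 0 0 0) (mk3 (-1) (-1) (-2)) (mk3 0 0 (-1))); comp.
- case: h01 => hi.
  + by apply: (@do_case C psi x y S hyS hxz hchi _ hj0 (mk3 3 1 2)
      (v8 [:: 0; 2; 0; 4; 0; 0; 0; 2]) (v8 [:: 0; 0; 0; 0; 2; 0; 2; 0]) (v8 [:: 0; 0; 0; 2; 0; 0; 0; 2]) (v8 [::])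
      (mk3 3 1 2) (mk3 2 2 2) (mk3 2 1 2) (mk3 1 1 2) (mk3 0 0 0) (mk3 1 1 1)); comp.
  + by apply: (@do_case C psi x y S hyS hxz hchi _ hj0 (mk3 1 3 2)
      (v8 [:: 2; 0; 0; 4; 0; 0; 0; 2]) (v8 [:: 0; 0; 0; 0; 0; 2; 2; 0]) (v8 [:: 0; 0; 0; 2; 0; 0; 0; 2]) (v8 [::])
      (mk3 2 2 2) (mk3 1 3 2) (mk3 1 2 2) (mk3 1 1 2) (mk3 0 0 0) (mk3 1 1 1)); comp.
Qed.

Section Q.
Variable C : fieldType.
Lemma qt_rel (t : 'I_8 -> C) : quasitorus Lambda t ->
  [/\ t (inord 0) ^+ 2 * t (inord 4) ^+ 2 = t (inord 0) * t (inord 1) * t (inord 2) * t (inord 3),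
      t (inord 1) ^+ 2 * t (inord 5) ^+ 2 = t (inord 0) * t (inord 1) * t (inord 2) * t (inord 3),
      t (inord 2) ^+ 2 * t (inord 6) ^+ 2 = t (inord 4) * t (inord 5) * t (inord 6) * t (inord 7) &
      t (inord 3) ^+ 2 * t (inord 7) ^+ 2 = t (inord 4) * t (inord 5) * t (inord 6) * t (inord 7)].
Proof.
move=> [hnz hprod].
have T0 := hprod (inord 0); rewrite big8 !mxE !inordK // /= in T0.
have T1 := hprod (inord 1); rewrite big8 !mxE !inordK // /= in T1.
have T2 := hprod (inord 2); rewrite big8 !mxE !inordK // /= in T2.
move: T0 T1 T2; rewrite !expr0z !expr1z !exprN1 -!exprnP !mulr1.
have n0 := hnz (inord 0); have n1 := hnz (inord 1); have n2 := hnz (inord 2);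
have n3 := hnz (inord 3); have n4 := hnz (inord 4); have n5 := hnz (inord 5);
have n6 := hnz (inord 6); have n7 := hnz (inord 7).
move: n0 n1 n2 n3 n4 n5 n6 n7.
move: (t (inord 0)) (t (inord 1)) (t (inord 2)) (t (inord 3)) (t (inord 4)) (t (inord 5))
  (t (inord 6)) (t (inord 7)) => t0 t1 t2 t3 t4 t5 t6 t7.
move=> n0 n1 n2 n3 n4 n5 n6 n7 T0 T1 T2; split.
- move: (congr1 (fun z => t0 * t1 * t2 * t3 * z) T0) => /= E; rewrite mulr1 in E.
  by rewrite -E; field; rewrite n1 n2 n3.
- move: (congr1 (fun z => t0 * t1 * t2 * t3 * z) T1) => /= E; rewrite mulr1 in E.
  by rewrite -E; field; rewrite n0 n2 n3.
- move: (congr1 (fun z => t4 * t5 * t6 * t7 * z) T2) => /= E; rewrite mulr1 in E.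
  by rewrite -E; field; rewrite n4 n5 n7.
- move: (congr2 (fun a b => a * b) (congr2 (fun a b => a * b) T0 T1) T2) => /=.
  rewrite !mulr1 => E.
  move: (congr1 (fun z => t3 ^+ 2 * t7 ^+ 2 * z) E) => /= {}E; rewrite mulr1 in E.
  by rewrite -E; field; rewrite n0 n1 n2 n3 n4 n5 n7.
Qed.
End Q.

Module MPart.
Import mpoly.
Section QC.
Variables (C : fieldType) (psi : C).
Definition MX (i : nat) : mpoly.mpoly 8 C := mpoly.mpolyX C (mpoly.mnm1 (inord i : 'I_8)).
Definition P1 : mpoly.mpoly 8 C := MX 0 ^+ 2 * MX 4 ^+ 2 + MX 1 ^+ 2 * MX 5 ^+ 2
   + mpoly.mpolyC 8 psi * MX 0 * MX 1 * MX 2 * MX 3.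
Definition P2 : mpoly.mpoly 8 C := MX 2 ^+ 2 * MX 6 ^+ 2 + MX 3 ^+ 2 * MX 7 ^+ 2
   + mpoly.mpolyC 8 psi * MX 4 * MX 5 * MX 6 * MX 7.

Lemma mevalP1 x : mpoly.meval x P1 = cc x 1 ^+ 2 * cc x 5 ^+ 2 + cc x 2 ^+ 2 * cc x 6 ^+ 2
    + psi * cc x 1 * cc x 2 * cc x 3 * cc x 4.
Proof. rewrite /P1 /MX !rmorphD !rmorphM /= mpoly.mevalC !mpoly.mevalXU /cc /=; ring. Qed.
Lemma mevalP2 x : mpoly.meval x P2 = cc x 3 ^+ 2 * cc x 7 ^+ 2 + cc x 4 ^+ 2 * cc x 8 ^+ 2
    + psi * cc x 5 * cc x 6 * cc x 7 * cc x 8.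
Proof. rewrite /P2 /MX !rmorphD !rmorphM /= mpoly.mevalC !mpoly.mevalXU /cc /=; ring. Qed.

Lemma closedBB : quot_closed Lambda (fun x => cox_open Lambda x /\ Y_BB psi x).
Proof.
split.
- exists (Y_BB psi); split => //.
  exists (fun p => p = P1 \/ p = P2) => x; split.
  + by move=> [h1 h2] p [->|->]; rewrite ?mevalP1 ?mevalP2.
  + move=> h; split; [move: (h P1 (or_introl erefl)) | move: (h P2 (or_intror erefl))];
      by rewrite ?mevalP1 ?mevalP2.
- move=> t x ht [[S [hS hz]] hY]; split.
  + exists S; split => // k; rewrite /act => /eqP; rewrite mulf_eq0 (negbTE (ht.1 k)) /=.
    by move/eqP; apply: hz.
  + have [A B C' D] := qt_rel ht; move: hY A B C' D; rewrite /Y_BB /cc /act /=.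
    move: (t (inord 0)) (t (inord 1)) (t (inord 2)) (t (inord 3)) (t (inord 4)) (t (inord 5))
      (t (inord 6)) (t (inord 7)) => t0 t1 t2 t3 t4 t5 t6 t7.
    move: (x (inord 0)) (x (inord 1)) (x (inord 2)) (x (inord 3)) (x (inord 4)) (x (inord 5))
      (x (inord 6)) (x (inord 7)) => x0 x1 x2 x3 x4 x5 x6 x7.
    move=> [h1 h2] A B C' D; split.
    * have -> : (t0 * x0) ^+ 2 * (t4 * x4) ^+ 2 + (t1 * x1) ^+ 2 * (t5 * x5) ^+ 2 +
          psi * (t0 * x0) * (t1 * x1) * (t2 * x2) * (t3 * x3) =
          (t0 ^+ 2 * t4 ^+ 2) * (x0 ^+ 2 * x4 ^+ 2) + (t1 ^+ 2 * t5 ^+ 2) * (x1 ^+ 2 * x5 ^+ 2)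
          + (t0 * t1 * t2 * t3) * (psi * x0 * x1 * x2 * x3) by ring.
      by rewrite A B -!mulrDr h1 mulr0.
    * have -> : (t2 * x2) ^+ 2 * (t6 * x6) ^+ 2 + (t3 * x3) ^+ 2 * (t7 * x7) ^+ 2 +
          psi * (t4 * x4) * (t5 * x5) * (t6 * x6) * (t7 * x7) =
          (t2 ^+ 2 * t6 ^+ 2) * (x2 ^+ 2 * x6 ^+ 2) + (t3 ^+ 2 * t7 ^+ 2) * (x3 ^+ 2 * x7 ^+ 2)
          + (t4 * t5 * t6 * t7) * (psi * x4 * x5 * x6 * x7) by ring.
      by rewrite C' D -!mulrDr h2 mulr0.
Qed.
End QC.
End MPart.

Section K.
Variable C : fieldType.

Lemma powL (z : C) (m0 m1 m2 p q r : int) : z != 0 ->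
  z ^ (m0 * p + m1 * q + m2 * r) = (z ^ m0) ^ p * (z ^ m1) ^ q * (z ^ m2) ^ r.
Proof. by move=> hz; rewrite !expfzDr ?expfz_neq0 // !exprz_exp. Qed.

Lemma ez2 (z : C) : z ^ 2 = z * z.
Proof. by rewrite -exprnP expr2. Qed.
Lemma ezN2 (z : C) : z ^ (-2) = (z * z)^-1.
Proof. by rewrite -invr_expz ez2. Qed.

Lemma chi_key (a0 a1 a6 a7 : C) (m0 m1 m2 : int) :
  a0 != 0 -> a1 != 0 -> a6 != 0 -> a7 != 0 ->
  (a0 * a0) ^ (m0 * 1 + m1 * (-1) + m2 * 0) * (a1 * a1) ^ (m0 * (-1) + m1 * 1 + m2 * 0)
  * (a6 * a6) ^ (m0 * 0 + m1 * 0 + m2 * 1) * (a7 * a7) ^ (m0 * 0 + m1 * 0 + m2 * (-1)) =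
  (a0 * a0 * a6 * a7) ^ (m0 * 2 + m1 * 0 + m2 * (-1)) * (a1 * a1 * a6 * a7) ^ (m0 * 0 + m1 * 2 + m2 * (-1))
  * (a0 * a1 * (a6 * a6)) ^ (m0 * (-1) + m1 * (-1) + m2 * 2)
  * (a0 * a1 * (a7 * a7)) ^ (m0 * (-1) + m1 * (-1) + m2 * 0).
Proof.
move=> h0 h1 h6 h7.
rewrite !expfzMl !powL //.
rewrite ?expr0z ?expr1z ?exprN1 ?ez2 ?ezN2.
have n := fun (z : C) (m : int) (hz : z != 0) => expfz_neq0 m hz.
move: (n _ m0 h0) (n _ m1 h0) (n _ m2 h0) (n _ m0 h1) (n _ m1 h1) (n _ m2 h1)
  (n _ m0 h6) (n _ m1 h6) (n _ m2 h6) (n _ m0 h7) (n _ m1 h7) (n _ m2 h7).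
move: (a0 ^ m0) (a0 ^ m1) (a0 ^ m2) (a1 ^ m0) (a1 ^ m1) (a1 ^ m2)
  (a6 ^ m0) (a6 ^ m1) (a6 ^ m2) (a7 ^ m0) (a7 ^ m1) (a7 ^ m2).
move=> A00 A01 A02 A10 A11 A12 A60 A61 A62 A70 A71 A72 *.
field.
by repeat (apply/andP; split).
Qed.
End K.

Lemma in_cone0 n m (V : 'M[int]_(n, m)) v : in_cone V set0 v <-> forall i, v i = 0.
Proof.
split.
- case=> c [_ [c0 cv]] i; rewrite cv big1 // => k _; by rewrite c0 ?inE // mul0r.
- move=> h; exists (fun _ => 0); split => //; split => // i.
  by rewrite h big1 // => k _; rewrite mul0r.
Qed.

Lemma in_cone1 n m (V : 'M[int]_(n, m)) k v :
  in_cone V [set k] v <-> exists r, 0 <= r /\ forall i, v i = r * vcol V k i.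
Proof.
split.
- case=> c [c0 [c1 cv]]; exists (c k); split => // i.
  rewrite cv (bigD1 k) //= big1 ?addr0 // => j hj; rewrite c1 ?mul0r // inE; exact: hj.
- case=> r [r0 hr]; exists (fun j => if j == k then r else 0); split.
    by move=> j; case: eqP.
  split; first by move=> j; rewrite inE; case: eqP.
  move=> i; rewrite hr (bigD1 k) //= eqxx big1 ?addr0 // => j /negPf ->; by rewrite mul0r.
Qed.

Definition sigma (j : 'I_4) : 'I_8 := inord (nth 0%N [:: 4; 5; 2; 3]%N j).

Lemma sig_facts (j0 : 'I_4) : [/\ face_set Wmx [set j0], face_set Lambda [set sigma j0]
   & forall i, vcol Lambda (sigma j0) i = vcol Wmx j0 i].
Proof.
move: j0; ord4; rewrite /sigma inordK //=; split;
  try (by [apply: faceW0 | apply: faceW1 | apply: faceW2 | apply: faceW3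
          | apply: faceL4 | apply: faceL5 | apply: faceL2 | apply: faceL3]);
  move=> i; rewrite /vcol !mxE !inordK //; by case: i => -[|[|[|//]]] ?.
Qed.

Section Fin.
Variables (C : fieldType) (psi : C) (x : 'I_8 -> C) (y : 'I_4 -> C).
Hypotheses (hchi : forall mu, chi Lambda mu x = chi Wmx mu y) (hLT : Y_LT psi y).

Lemma finish1 j0 : y j0 = 0 -> (forall j, j != j0 -> y j != 0) -> (forall k, x k = 0 -> k = sigma j0) ->
  cox_open Wmx y /\ toric_map_rel Lambda Wmx x y /\ Y_LT psi y /\ iso_locus Lambda Wmx y.
Proof.
move=> y0 hy hx; have [fW fL col] := sig_facts j0.
have hz : forall j, y j = 0 -> j \in [set j0].
  move=> j hj; rewrite inE; apply/negPn/negP => /hy; by rewrite hj eqxx.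
split; first by exists [set j0].
split.
  exists [set j0]; split => //; split.
    by move=> j; rewrite inE => /hy.
  split; last by move=> mu _; apply: hchi.
  move=> k /hx ->; apply/in_cone1; exists 1; split => // i; by rewrite mul1r col.
split => //.
exists [set sigma j0]; split; first by right.
have -> : [set j | y j == 0] = [set j0].
  apply/setP => j; rewrite !inE; apply/eqP/eqP => [/hz|->//]; by rewrite inE => /eqP.
move=> v; rewrite !in_cone1; split; case=> r [r0 hr]; exists r; split => // i; by rewrite hr col.
Qed.

Lemma finish0 : (forall j, y j != 0) -> (forall k, x k != 0) ->
  cox_open Wmx y /\ toric_map_rel Lambda Wmx x y /\ Y_LT psi y /\ iso_locus Lambda Wmx y.
Proof.
move=> hy hx.
have fW : face_set Wmx [set inord 0] := faceW0.
split; first by exists [set inord 0]; split => // j hj; move: (hy j); rewrite hj eqxx.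
split.
  exists [set inord 0]; split => //; split; first by move=> j _; apply: hy.
  split; last by move=> mu _; apply: hchi.
  by move=> k hk; move: (hx k); rewrite hk eqxx.
split => //.
exists set0; split; first by left.
have -> : [set j | y j == 0] = set0.
  by apply/setP => j; rewrite !inE (negbTE (hy j)).
by move=> v; rewrite !in_cone0.
Qed.
End Fin.

Lemma sumLm (mu : 'I_3 -> int) (k : 'I_8) : \sum_(i < 3) mu i * Lambda i k =
  mu (inord 0) * nth 0 [:: 1; -1; -1; -1; 2; 0; 0; 0] k + mu (inord 1) * nth 0 [:: -1; 1; -1; -1; 0; 2; 0; 0] k
  + mu (inord 2) * nth 0 [:: 0; 0; 2; 0; -1; -1; 1; -1] k.
Proof.
rewrite !big_ord_recr big_ord0 /= !mxE add0r.
by congr (_ * _ + _ * _ + _ * _); apply: f_equal; apply: val_inj; rewrite /= inordK.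
Qed.

Lemma sumWm (mu : 'I_3 -> int) (k : 'I_4) : \sum_(i < 3) mu i * Wmx i k =
  mu (inord 0) * nth 0 [:: 2; 0; -1; -1] k + mu (inord 1) * nth 0 [:: 0; 2; -1; -1] k
  + mu (inord 2) * nth 0 [:: -1; -1; 2; 0] k.
Proof.
rewrite !big_ord_recr big_ord0 /= !mxE add0r.
by congr (_ * _ + _ * _ + _ * _); apply: f_equal; apply: val_inj; rewrite /= inordK.
Qed.

Section Cons.
Variables (C : fieldType) (x : 'I_8 -> C) (a0 a1 a6 a7 : C).
Hypotheses (ha0 : a0 ^+ 2 = x (inord 0)) (ha1 : a1 ^+ 2 = x (inord 1))
  (ha6 : a6 ^+ 2 = x (inord 6)) (ha7 : a7 ^+ 2 = x (inord 7))
  (na0 : a0 != 0) (na1 : a1 != 0) (na6 : a6 != 0) (na7 : a7 != 0).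

Definition ymk : 'I_4 -> C := fun j => nth 0
  [:: x (inord 4) * (x (inord 0) * a6 * a7); x (inord 5) * (x (inord 1) * a6 * a7);
      x (inord 2) * (a0 * a1 * x (inord 6)); x (inord 3) * (a0 * a1 * x (inord 7))] j.

Lemma chi_ymk mu : chi Lambda mu x = chi Wmx mu ymk.
Proof.
rewrite /chi big8 big4 !sumLm !sumWm /ymk !inordK //=.
rewrite !expfzMl -ha0 -ha1 -ha6 -ha7 !expr2 !expfzMl.
rewrite !(powL _ _ _ _ _ _ na0) !(powL _ _ _ _ _ _ na1) !(powL _ _ _ _ _ _ na6) !(powL _ _ _ _ _ _ na7).
rewrite ?expr0z ?expr1z ?exprN1 ?ez2 ?ezN2.
have n := fun (z : C) (m : int) (hz : z != 0) => expfz_neq0 m hz.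
move: (n _ (mu (inord 0)) na0) (n _ (mu (inord 1)) na0) (n _ (mu (inord 2)) na0)
  (n _ (mu (inord 0)) na1) (n _ (mu (inord 1)) na1) (n _ (mu (inord 2)) na1)
  (n _ (mu (inord 0)) na6) (n _ (mu (inord 1)) na6) (n _ (mu (inord 2)) na6)
  (n _ (mu (inord 0)) na7) (n _ (mu (inord 1)) na7) (n _ (mu (inord 2)) na7).
move: (a0 ^ mu (inord 0)) (a0 ^ mu (inord 1)) (a0 ^ mu (inord 2))
  (a1 ^ mu (inord 0)) (a1 ^ mu (inord 1)) (a1 ^ mu (inord 2))
  (a6 ^ mu (inord 0)) (a6 ^ mu (inord 1)) (a6 ^ mu (inord 2))
  (a7 ^ mu (inord 0)) (a7 ^ mu (inord 1)) (a7 ^ mu (inord 2)).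
move=> A00 A01 A02 A10 A11 A12 A60 A61 A62 A70 A71 A72 *.
field.
by repeat (apply/andP; split).
Qed.
End Cons.

Lemma rel_of_BB (C : numClosedFieldType) (psi : C) x : psi != 0 -> cox_open Lambda x -> Y_BB psi x ->
  exists y, cox_open Wmx y /\ toric_map_rel Lambda Wmx x y /\ Y_LT psi y /\ iso_locus Lambda Wmx y.
Proof.
move=> hp hc hY; have [S [hS hz]] := hc.
have hin : forall k, x (inord k) = 0 -> (inord k : 'I_8) \in S := fun k h => hz _ h.
move: hY; rewrite /Y_BB /cc /= => -[h1 h2].
have sq2 : forall u v : C, u ^+ 2 * v ^+ 2 = 0 -> u = 0 \/ v = 0.
  by move=> u v /eqP; rewrite mulf_eq0 !expf_eq0 /= => /orP[] /eqP; tauto.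
have n0 : x (inord 0) != 0.
  apply/eqP => e; have : x (inord 1) ^+ 2 * x (inord 5) ^+ 2 = 0 by rewrite -h1 e; ring.
  by case/sq2 => /hin h; [apply: (faceL_01 (hin _ e) h hS) | apply: (faceL_05 (hin _ e) h hS)].
have n1 : x (inord 1) != 0.
  apply/eqP => e; have : x (inord 0) ^+ 2 * x (inord 4) ^+ 2 = 0 by rewrite -h1 e; ring.
  by case/sq2 => /hin h; [apply: (faceL_01 h (hin _ e) hS) | apply: (faceL_14 (hin _ e) h hS)].
have n6 : x (inord 6) != 0.
  apply/eqP => e; have : x (inord 3) ^+ 2 * x (inord 7) ^+ 2 = 0 by rewrite -h2 e; ring.
  by case/sq2 => /hin h; [apply: (faceL_36 h (hin _ e) hS) | apply: (faceL_67 (hin _ e) h hS)].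
have n7 : x (inord 7) != 0.
  apply/eqP => e; have : x (inord 2) ^+ 2 * x (inord 6) ^+ 2 = 0 by rewrite -h2 e; ring.
  by case/sq2 => /hin h; [apply: (faceL_27 h (hin _ e) hS) | apply: (faceL_67 h (hin _ e) hS)].
have hsq : forall k, exists a : C, a ^+ 2 = x (inord k) /\ (x (inord k) != 0 -> a != 0).
  move=> k; exists (sqrtC (x (inord k))); split; first exact: sqrtCK.
  move=> hx; apply/eqP => e; move: hx; rewrite -(sqrtCK (x (inord k))) e expr0n /= eqxx //.
have [a0 [ha0 na0]] := hsq 0%N; have [a1 [ha1 na1]] := hsq 1%N.
have [a6 [ha6 na6]] := hsq 6%N; have [a7 [ha7 na7]] := hsq 7%N.
move: {na0 na1 na6 na7}(na0 n0) (na1 n1) (na6 n6) (na7 n7) => na0 na1 na6 na7.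
have hchi := chi_ymk ha0 ha1 ha6 ha7 na0 na1 na6 na7.
set y := ymk x a0 a1 a6 a7 in hchi *.
have hLT : Y_LT psi y.
  rewrite /Y_LT /cc /y /ymk !inordK //=; move: h1 h2.
  rewrite -ha0 -ha1 -ha6 -ha7 => h1 h2; split.
  - by rewrite -[RHS](mulr0 (a6 ^+ 2 * a7 ^+ 2)) -h1; ring.
  - by rewrite -[RHS](mulr0 (a0 ^+ 2 * a1 ^+ 2)) -h2; ring.
have ey : forall j, (j < 4)%N -> y (inord j) = 0 <-> x (inord (nth 0%N [:: 4; 5; 2; 3]%N j)) = 0.
  move=> j hj; rewrite /y /ymk inordK //.
  move: hj; case: j => [|[|[|[|//]]]] _ /=; split => [/eqP|->]; rewrite ?mul0r //;
    rewrite !mulf_eq0 ?(negbTE n0) ?(negbTE n1) ?(negbTE n6) ?(negbTE n7)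
      ?(negbTE na0) ?(negbTE na1) ?(negbTE na6) ?(negbTE na7) ?orbF => /eqP //.
have nx : forall k, x k = 0 -> (k = inord 2 /\ y (inord 2) = 0) \/ (k = inord 3 /\ y (inord 3) = 0)
    \/ (k = inord 4 /\ y (inord 0) = 0) \/ (k = inord 5 /\ y (inord 1) = 0).
  ord8 => e.
  - by move: n0; rewrite e eqxx.
  - by move: n1; rewrite e eqxx.
  - by left; split => //; apply/(ey 2%N).
  - by right; left; split => //; apply/(ey 3%N).
  - by right; right; left; split => //; apply/(ey 0%N).
  - by right; right; right; split => //; apply/(ey 1%N).
  - by move: n6; rewrite e eqxx.
  - by move: n7; rewrite e eqxx.
have two : forall j j' : 'I_4, j != j' -> y j = 0 -> y j' = 0 -> False.
  have H : (y (inord 0) = 0 /\ y (inord 1) = 0) \/ (y (inord 0) = 0 /\ y (inord 2) = 0) \/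
      (y (inord 0) = 0 /\ y (inord 3) = 0) \/ (y (inord 1) = 0 /\ y (inord 2) = 0) \/
      (y (inord 1) = 0 /\ y (inord 3) = 0) \/ (y (inord 2) = 0 /\ y (inord 3) = 0) -> False.
    move=> hor; move: hLT; rewrite /Y_LT /cc /= => -[l1 l2].
    have [e0 e1 e2 e3] := LT_alg hp l1 l2 hor.
    have i4 := hin _ ((ey 0%N isT).1 e0); have i5 := hin _ ((ey 1%N isT).1 e1).
    have i2 := hin _ ((ey 2%N isT).1 e2); have i3 := hin _ ((ey 3%N isT).1 e3).
    exact: (faceL_2345 i2 i3 i4 i5 hS).
  ord4; ord4; rewrite eq_inord //= => _ e e'; apply: H; tauto.
have gen1 : forall j0 : 'I_4, y j0 = 0 -> (forall j, j != j0 -> y j != 0) ->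
    exists y, cox_open Wmx y /\ toric_map_rel Lambda Wmx x y /\ Y_LT psi y /\ iso_locus Lambda Wmx y.
  move=> j0 y0 hoth; exists y; apply: (finish1 hchi hLT y0 hoth).
  move=> k /nx [[-> e]|[[-> e]|[[-> e]|[-> e]]]].
  - case: (eqVneq j0 (inord 2)) => [->|ne]; first by rewrite /sigma inordK.
    by move: (hoth (inord 2)); rewrite eq_sym ne e eqxx => /(_ isT).
  - case: (eqVneq j0 (inord 3)) => [->|ne]; first by rewrite /sigma inordK.
    by move: (hoth (inord 3)); rewrite eq_sym ne e eqxx => /(_ isT).
  - case: (eqVneq j0 (inord 0)) => [->|ne]; first by rewrite /sigma inordK.
    by move: (hoth (inord 0)); rewrite eq_sym ne e eqxx => /(_ isT).
  - case: (eqVneq j0 (inord 1)) => [->|ne]; first by rewrite /sigma inordK.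
    by move: (hoth (inord 1)); rewrite eq_sym ne e eqxx => /(_ isT).
case: (boolP [exists j, y j == 0]) => [/existsP [j0 /eqP y0] | /existsPn hall].
- apply: (gen1 j0 y0) => j hj; apply/eqP => yj; exact: (two j j0 hj yj y0).
- exists y; apply: (finish0 hchi hLT hall) => k; apply/eqP.
  move=> /nx [[_ e]|[[_ e]|[[_ e]|[_ e]]]];
    [move: (hall (inord 2)) | move: (hall (inord 3)) | move: (hall (inord 0)) | move: (hall (inord 1))];
    by rewrite e eqxx.
Qed.


Theorem proposition2p4 (R : realType) :
  exists bad : seq R[i], forall psi : R[i], psi \notin bad ->
    forall x : 'I_8 -> R[i], cox_open Lambda x ->
      (Y_BB psi x <-> strict_transform Lambda Wmx (Y_LT psi) x).
Proof.
exists [:: 0] => psi; rewrite inE => hp x hc; split.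
- move=> hY; split => // A _ hB; apply: hB; split => //; exact: rel_of_BB hp hc hY.
- case=> _ h.
  have [] := h _ (MPart.closedBB psi) => // x' [hc' [y [hcy [[S [hS [hyS [hxz hchi]]]] [hLT _]]]]].
  split => //; exact: (BB_of_rel hp hcy hLT hS hyS hxz hchi).
Qed.
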